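(* Let $n\ge3$ and $G=C_n\Box P_2$ (the $n$-prism, with $2n$ vertices). Then $$3+\sqrt{3(2n-1)(2n-3)}\ >\ E(G)=QE(G)\ \ge\ \begin{cases}2n & \text{if } n\equiv0\pmod3,\\[4pt] 6n\cdot\dfrac{\sqrt{2\cos\big(\frac{2\pi\lfloor n/6\rfloor}{n}\big)-1}}{1+\cos\big(\frac{2\pi\lfloor n/6\rfloor}{n}\big)} & \text{if } n\equiv1\text{ or }2\pmod 6,\\[10pt] 6n\cdot\dfrac{\sqrt{1-2\cos\big(\frac{2\pi\lceil n/6\rceil}{n}\big)}}{2-\cos\big(\frac{2\pi\lceil n/6\rceil}{n}\big)} & \text{if } n\equiv4\text{ or }5\pmod6,\end{cases}$$ and equality holds in the right-hand (lower) inequality if and only if $n=4$, i.e. $G=C_4\Box P_2$.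
   Context: All graphs are finite, simple and undirected. $C_n$ is the cycle on $n$ vertices, $P_2=K_2$, and $\Box$ is the Cartesian product of graphs. For a graph $G$ with $N$ vertices and $m$ edges, let $q_1\ge\cdots\ge q_N\ge0$ be the eigenvalues of the signless Laplacian $Q(G)=D(G)+A(G)$ (degree diagonal matrix plus adjacency matrix). The signless Laplacian energy is $QE(G)=\sum_{i=1}^N|q_i-\frac{2m}{N}|$, and the energy is $E(G)=\sum_i|\lambda_i|$ over the eigenvalues $\lambda_i$ of the adjacency matrix. *)

(* Defs.v *)
From HB Require Import structures.
From mathcomp Require Import all_boot all_order all_algebra.
From mathcomp Require Import reals trigo.
From mathcomp Require Import complex.
Set Implicit Arguments. Unset Strict Implicit. Unset Printing Implicit Defensive.
Import Order.TTheory GRing.Theory Num.Theory.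
Local Open Scope ring_scope.

Definition cycle_rel (n : nat) : rel 'I_n :=
  fun i j => (val j == (val i).+1 %% n)%N || (val i == (val j).+1 %% n)%N.

Arguments cycle_rel n : clear implicits.

Definition P2_rel : rel 'I_2 := fun a b => a != b.

Definition cart_rel (T1 T2 : finType) (e1 : rel T1) (e2 : rel T2) : rel (T1 * T2)%type :=
  fun u v => ((u.1 == v.1) && e2 u.2 v.2) || ((u.2 == v.2) && e1 u.1 v.1).

Definition prism_rel (n : nat) : rel ('I_n * 'I_2)%type := cart_rel (cycle_rel n) P2_rel.
Arguments prism_rel n : clear implicits.

Section GraphMatrices.
Variables (R : realType) (T : finType) (e : rel T).

Definition adjmx : 'M[R]_#|T| :=
  \matrix_(i, j) (e (enum_val i) (enum_val j))%:R.

Definition deg (x : T) : nat := #|[set y | e x y]|.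

Definition degmx : 'M[R]_#|T| := \matrix_(i, j) ((deg (enum_val i))%:R *+ (i == j)).

Definition signlessmx : 'M[R]_#|T| := degmx + adjmx.

(* number of edges m (each edge of a symmetric irreflexive relation is counted
   twice among ordered pairs) *)
Definition nedges : nat := #|[set p : (T * T)%type | e p.1 p.2]| %/ 2.

End GraphMatrices.

(* The eigenvalues of a real square matrix, with multiplicity, as the roots
   of its characteristic polynomial in the algebraic closure R[i] of R. *)
Definition eigenvalues (R : realType) (N : nat) (A : 'M[R]_N) : seq R[i] :=
  sval (closed_field_poly_normal (char_poly (map_mx (@real_complex R) A))).

Definition energy (R : realType) (T : finType) (e : rel T) : R :=
  \sum_(z <- eigenvalues (adjmx R e)) Normc.normc z.

Definition QEnergy (R : realType) (T : finType) (e : rel T) : R :=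
  \sum_(z <- eigenvalues (signlessmx R e))
     Normc.normc (z - ((2 * nedges e)%N%:R / (#|T|)%:R)%:C%C).

Definition prism_lower_bound (R : realType) (n : nat) : R :=
  if (n %% 3 == 0)%N then (2 * n)%N%:R
  else if (n %% 6 == 1)%N || (n %% 6 == 2)%N then
    let c := cos (2 * pi * (n %/ 6)%N%:R / n%:R) in
    (6 * n)%N%:R * (Num.sqrt (2 * c - 1) / (1 + c))
  else (* n = 4 or 5 mod 6 ; ceil(n/6) = (n+5) %/ 6 *)
    let c := cos (2 * pi * ((n + 5) %/ 6)%N%:R / n%:R) in
    (6 * n)%N%:R * (Num.sqrt (1 - 2 * c) / (2 - c)).

(* Main.v *)
Require Import Defs.
From HB Require Import structures.
From mathcomp Require Import all_boot all_order all_algebra.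
From mathcomp Require Import reals trigo.
From mathcomp Require Import complex.
From mathcomp Require Import ring lra zify.
Import Order.TTheory GRing.Theory Num.Theory.
Local Open Scope ring_scope.

Section W.
Variable R : realType.
Variable n : nat.
Hypothesis n_gt0 : (0 < n)%N.
Local Notation C := R[i].


Lemma mulcE (a b c d : R) : (Complex a b) * (Complex c d) = Complex (a*c - b*d) (a*d + b*c) :> C.
Proof. by []. Qed.
Lemma addcE (a b c d : R) : (Complex a b) + (Complex c d) = Complex (a+c) (b+d) :> C.
Proof. by []. Qed.

Definition ang : R := 2 * pi / n%:R.
Definition w (m : nat) : C := Complex (cos (m%:R * ang)) (sin (m%:R * ang)).

Lemma wD m1 m2 : w (m1 + m2) = w m1 * w m2.
Proof.
rewrite /w natrD mulrDl cosD sinD mulcE; congr Complex; ring.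
Qed.

Lemma w0 : w 0 = 1.
Proof. by rewrite /w mul0r cos0 sin0. Qed.

Lemma nR_neq0 : (n%:R : R) != 0.
Proof. by rewrite pnatr_eq0 -lt0n. Qed.

Lemma wn : w n = 1.
Proof.
rewrite /w; have -> : (n%:R * ang) = pi *+ 2.
  rewrite /ang -mulr_natr; field; exact: nR_neq0.
by rewrite cos2pi sin2pi.
Qed.

Lemma wMn q : w (q * n) = 1.
Proof. by elim: q => [|q IH]; rewrite ?mul0n ?w0 // mulSn wD wn IH mulr1. Qed.

Lemma wmod m : w (m %% n) = w m.
Proof. by rewrite {2}(divn_eq m n) wD wMn mul1r. Qed.

Lemma wX m j : w m ^+ j = w (m * j).
Proof.
elim: j => [|j IH]; first by rewrite muln0 w0.
by rewrite exprS IH mulnS wD.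
Qed.

Lemma ang_gt0 : 0 < ang.
Proof. by rewrite /ang divr_gt0 ?mulr_gt0 ?pi_gt0 // ltr0n. Qed.

Lemma wneq1 d : (0 < d < n)%N -> w d != 1.
Proof.
move=> /andP[d0 dn]; apply/negP => /eqP [] hc _.
set t := d%:R * ang in hc.
have t0 : 0 < t by rewrite /t mulr_gt0 ?ang_gt0 // ltr0n.
have t2 : t < pi *+ 2.
  have -> : t = pi *+ 2 * (d%:R / n%:R).
    by rewrite /t /ang -mulr_natr; field; exact: nR_neq0.
  have p2 : 0 < pi *+ 2 :> R by rewrite mulr2n addr_gt0 ?pi_gt0.
  rewrite -{2}(mulr1 (pi*+2)) ltr_pM2l //.
  by rewrite ltr_pdivrMr ?ltr0n // mul1r ltr_nat.
have key : forall u : R, (0 < u <= pi)%R -> cos u < 1.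
  move=> u hu; case/andP: hu => u0 up; rewrite -cos0 ltr_cos // ?in_itv /= ?lexx ?pi_ge0 //.
  by rewrite (ltW u0) up.
case: (lerP t pi) => tp.
  by have := key t; rewrite t0 tp hc ltxx => /(_ isT).
have e2 : cos (pi *+ 2 - t) = cos t by rewrite addrC cosD2pi cosN.
suff: (0 < pi*+2 - t <= pi)%R by move=> /key; rewrite e2 hc ltxx.
rewrite subr_gt0 t2 /=.
by rewrite lerBlDr mulr2n lerD2l ltW.
Qed.

Lemma geom d : \sum_(j < n) w (j * d) = if (n %| d)%N then n%:R else 0.
Proof.
case: ifP => nd.
  rewrite (eq_bigr (fun _ => 1)); first by rewrite sumr_const card_ord.
  move=> j _; case/dvdnP: nd => q ->; by rewrite mulnA wMn.
have hx : w d != 1.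
  rewrite -wmod wneq1 // ltn_mod n_gt0 andbT lt0n.
  by move: nd; rewrite /dvdn => ->.
have : (w d - 1) * \sum_(j < n) w d ^+ j = 0.
  by rewrite -subrX1 wX wMn subrr.
move/eqP; rewrite mulf_eq0 subr_eq0 (negbTE hx) /= => /eqP {2}<-.
by apply: eq_bigr => j _; rewrite wX mulnC.
Qed.


Lemma w_n1 k : w ((n - 1) * k) = Complex (cos (k%:R * ang)) (- sin (k%:R * ang)).
Proof.
rewrite /w.
have -> : ((n - 1) * k)%:R * ang = - (k%:R * ang) + (pi *+ 2) *+ k.
  rewrite -mulrnA -mulr_natr !natrM natrB // /ang; field; exact: nR_neq0.
by rewrite (periodicn (@cosD2pi R)) (periodicn (@sinD2pi R)) cosN sinN.
Qed.

Lemma wsum k : w k + w ((n - 1) * k) = (2 * cos (k%:R * ang))%:C%C.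
Proof.
rewrite w_n1 /w addcE /= /real_complex_def; congr Complex; [ring | ring].
Qed.

End W.

Section Graph.
Variable R : realType.
Variable n : nat.
Hypothesis hn : (2 < n)%N.
Local Notation C := R[i].
Local Notation T := ('I_n * 'I_2)%type.
Local Notation w := (w R n).
Local Notation ang := (ang R n).

Let n_gt0 : (0 < n)%N. Proof. by apply: leq_trans hn. Qed.

Definition sgn (m : nat) : C := (-1) ^+ m.
Definition F (x y : T) : C := w (x.1 * y.1) * sgn (x.2 * y.2).
Definition lamR (y : T) : R := 2 * cos (y.1%:R * ang) + (-1) ^+ y.2.

Definition nxt (a : 'I_n) : 'I_n := Ordinal (ltn_pmod a.+1 n_gt0).
Definition prv (a : 'I_n) : 'I_n := Ordinal (ltn_pmod (a + n - 1)%N n_gt0).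

Lemma modS a : (a < n)%N -> (a.+1 %% n = (if (a.+1 < n) then a.+1 else 0))%N.
Proof.
move=> an; case: ifP => h; first by rewrite modn_small.
have -> : (a.+1 = n)%N by lia.
by rewrite modnn.
Qed.

Lemma modP a : (a < n)%N -> ((a + n - 1) %% n = (if a == 0 then n - 1 else a - 1))%N.
Proof.
move=> an; case: ifP => /eqP h.
  by rewrite h add0n modn_small //; lia.
have -> : (a + n - 1 = (a - 1) + n)%N by lia.
by rewrite modnDr modn_small //; lia.
Qed.

Lemma cyc_eq (a j : 'I_n) : cycle_rel n a j = (j == nxt a) || (j == prv a).
Proof.
rewrite /cycle_rel; congr orb.
have ha := ltn_ord a; have hj := ltn_ord j.
rewrite -(inj_eq val_inj) /= modP // modS //.
apply/eqP/eqP => H; case: ifP H => h1; case: ifP => h2; lia.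
Qed.

Lemma nxt_prv (a : 'I_n) : nxt a != prv a.
Proof.
have ha := ltn_ord a.
rewrite -(inj_eq val_inj) /= modP // modS //.
case: ifP => h1; case: ifP => /eqP h2; apply/eqP; lia.
Qed.

Lemma natr_or (p q : bool) : ~~ (p && q) -> ((p || q)%:R : C) = p%:R + q%:R.
Proof. by case: p; case: q; rewrite ?addr0 ?add0r. Qed.

Lemma natr_and (p q : bool) : ((p && q)%:R : C) = p%:R * q%:R.
Proof. by case: p; case: q; rewrite /= ?mulr1 ?mulr0. Qed.

Lemma sum_eq1 (I : finType) (i0 : I) (G : I -> C) :
  \sum_i (i0 == i)%:R * G i = G i0.
Proof.
rewrite (bigD1 i0) //= eqxx mul1r big1 ?addr0 // => i hi.
by rewrite eq_sym (negbTE hi) mul0r.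
Qed.

Lemma sum_eq1' (I : finType) (i0 : I) (G : I -> C) :
  \sum_i (i == i0)%:R * G i = G i0.
Proof. by rewrite -(@sum_eq1 I i0 G); apply: eq_bigr => i _; rewrite eq_sym. Qed.

Lemma term_eq (x1 j : 'I_n) (x2 b : 'I_2) :
  ((prism_rel n (x1, x2) (j, b))%:R : C) =
  (x1 == j)%:R * (x2 != b)%:R + (x2 == b)%:R * ((j == nxt x1)%:R + (j == prv x1)%:R).
Proof.
rewrite /prism_rel /cart_rel /P2_rel /= cyc_eq natr_or; last first.
  by case: (x2 == b); rewrite ?andbF ?andbT.
rewrite !natr_and natr_or //.
by apply/negP => /andP[/eqP -> /eqP h]; move: (nxt_prv x1); rewrite h eqxx.
Qed.

Lemma sumT (G : T -> C) : \sum_z G z = \sum_(j < n) \sum_(b < 2) G (j, b).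
Proof. by rewrite pair_bigA; apply: eq_bigr => -[j b]. Qed.

Lemma X_eq (x2 s : 'I_2) :
  \sum_(b < 2) (x2 != b)%:R * sgn (b * s) = (-1) ^+ s * sgn (x2 * s).
Proof.
rewrite !big_ord_recl big_ord0 /sgn.
case: x2 => [[|[|//]] p]; case: s => [[|[|//]] q] /=;
  rewrite ?expr0 ?expr1 ?mulr1 ?mul1r ?mulr0 ?addr0 ?add0r //=.
by rewrite mul0r addr0 mulrNN mulr1.
Qed.

Lemma eigF (x y : T) :
  \sum_z ((prism_rel n x z)%:R : C) * F z y = (lamR y)%:C%C * F x y.
Proof.
case: x => x1 x2; case: y => k s.
rewrite sumT /F /=.
have id : forall a b c d e f : C, (a*b + c*d)*(e*f) = (a*e)*(b*f) + (d*e)*(c*f).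
  by move=> *; ring.
under eq_bigr => j _.
  under eq_bigr => b _ do rewrite term_eq id.
  rewrite big_split /= -!mulr_sumr sum_eq1.
  over.
rewrite big_split /= -!mulr_suml sum_eq1.
rewrite (eq_bigr (fun j : 'I_n => (j == nxt x1)%:R * w (j * k) + (j == prv x1)%:R * w (j * k))); last by move=> j _; rewrite mulrDl.
rewrite big_split /= sum_eq1' sum_eq1' X_eq.
have e1 : w (nxt x1 * k) = w (x1 * k) * w k.
  by rewrite /= -wmod // modnMml wmod // mulSnr wD.
have e2 : w (prv x1 * k) = w (x1 * k) * w ((n - 1) * k).
  rewrite /= -wmod // modnMml wmod // -addnBA // mulnDl wD //.
rewrite e1 e2.
have e3 := @wsum R n n_gt0 k.
have e4 : w ((n - 1) * k) = (2 * cos (k%:R * ang))%:C%C - w k by rewrite -e3 addrC addKr.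
rewrite e4 /lamR /= rmorphD /= rmorphXn /= rmorphN1.
ring.
Qed.

End Graph.

Section Eig.
Variable R : realType.
Local Notation C := R[i].

Lemma char_poly_diag N (M : 'M[C]_N) (V : 'M[C]_N) (d : 'I_N -> C) :
  \det V != 0 -> M *m V = V *m diag_mx (\row_j d j) ->
  char_poly M = \prod_j ('X - (d j)%:P).
Proof.
move=> dV HMV.
set D := diag_mx (\row_j d j).
have -> : \prod_j ('X - (d j)%:P) = char_poly D.
  rewrite char_poly_trig ?diag_mx_is_trig //.
  by apply: eq_bigr => j _; rewrite !mxE eqxx mulr1n.
set VP := map_mx polyC V.
have key : char_poly_mx M *m VP = VP *m char_poly_mx D.
  by rewrite /char_poly_mx mulmxBl mulmxBr mul_scalar_mx mul_mx_scalar -!map_mxM HMV.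
have dVP : \det VP != 0 by rewrite det_map_mx polyC_eq0.
apply: (mulIf dVP).
by rewrite /char_poly -det_mulmx key det_mulmx mulrC.
Qed.

Lemma eig_sum N (M : 'M[R]_N) (V : 'M[C]_N) (d : 'I_N -> C) (f : C -> R) :
  \det V != 0 -> map_mx (real_complex R) M *m V = V *m diag_mx (\row_j d j) ->
  \sum_(z <- eigenvalues M) f z = \sum_j f (d j).
Proof.
move=> dV HMV; rewrite /eigenvalues; case: closed_field_poly_normal => s /= Hs.
have hc := @char_poly_diag N _ V d dV HMV.
move: Hs; rewrite hc.
have lc : lead_coef (\prod_j ('X - (d j)%:P)) = 1.
  by apply/monicP; rewrite monic_prod_XsubC.
rewrite lc scale1r => Hs.
have hp : perm_eq (map d (index_enum 'I_N)) s.
  by apply: prod_XsubC_eq; rewrite big_map -Hs.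
by rewrite -(perm_big _ hp) big_map.
Qed.

Lemma sum_enum (T : finType) (G : T -> C) : \sum_(k < #|T|) G (enum_val k) = \sum_z G z.
Proof. by rewrite -(big_enum_val (A := predT)). Qed.

Lemma sum_enumR (T : finType) (G : T -> R) : \sum_(k < #|T|) G (enum_val k) = \sum_z G z.
Proof. by rewrite -(big_enum_val (A := predT)). Qed.

End Eig.

Section Graph2.
Variable R : realType.
Variable n : nat.
Hypothesis hn : (2 < n)%N.
Local Notation C := R[i].
Local Notation T := ('I_n * 'I_2)%type.
Local Notation w := (w R n).
Local Notation ang := (ang R n).

Let n_gt0 : (0 < n)%N. Proof. by apply: leq_trans hn. Qed.


Local Notation N := #|{: 'I_n * 'I_2}|.

Definition Vm : 'M[C]_N := \matrix_(i, j) F R n (enum_val i) (enum_val j).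

Lemma AV : map_mx (real_complex R) (adjmx R (prism_rel n)) *m Vm =
  Vm *m diag_mx (\row_j (lamR R n (enum_val j))%:C%C).
Proof.
apply/matrixP => i j; rewrite mul_mx_diag !mxE.
under eq_bigr => k _ do rewrite !mxE rmorph_nat.
rewrite (@sum_enum R _ (fun z => ((prism_rel n (enum_val i) z)%:R : C) * F R n z (enum_val j))).
by rewrite eigF // mulrC.
Qed.

Definition Gm (x z : T) : C := w (z.1 * (n - x.1)) * sgn R (x.2 * z.2).
Definition Wm : 'M[C]_N := \matrix_(i, j) Gm (enum_val i) (enum_val j).

Lemma dvd_eq (k k' : 'I_n) : (n %| n - k + k')%N = (k == k').
Proof.
have hk := ltn_ord k; have hk' := ltn_ord k'.
case: eqP => [<-|hne].
  by rewrite subnK ?dvdnn // ltnW.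
apply/negP => /dvdnP [q hq].
have : k <> k' :> nat by move=> h; apply: hne; apply: val_inj.
by case: q hq => [|[|q]] hq; rewrite ?mulSn in hq; lia.
Qed.

Lemma sgn_sum (s s' : 'I_2) :
  \sum_(b < 2) sgn R (s * b) * sgn R (b * s') = 2%:R * (s == s')%:R.
Proof.
rewrite !big_ord_recl big_ord0 /sgn.
case: s => [[|[|//]] p]; case: s' => [[|[|//]] q] /=;
  rewrite ?expr0 ?expr1 ?mulr1 ?mul1r ?mulr0 ?addr0 ?add0r ?mulrNN //=.
- by rewrite subrr.
- by rewrite subrr.
- by rewrite mulr1.
Qed.

Lemma orth (x y : T) : \sum_z Gm x z * F R n z y = (2 * n)%N%:R * (x == y)%:R.
Proof.
case: x => k s; case: y => k' s'.
rewrite sumT /Gm /F /=.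
have id : forall a b c d : C, (a * b) * (c * d) = (a * c) * (b * d) by move=> *; ring.
under eq_bigr => j _.
  under eq_bigr => b _ do rewrite id -wD -mulnDr.
  rewrite -mulr_sumr sgn_sum.
  over.
rewrite /= -mulr_suml geom // dvd_eq xpair_eqE.
case: (k == k'); case: (s == s'); rewrite /= ?mulr0 ?mul0r ?mulr1 //.
by rewrite natrM mulrC.
Qed.

Lemma WV : Wm *m Vm = ((2 * n)%N%:R)%:M.
Proof.
apply/matrixP => i j; rewrite !mxE.
under eq_bigr => k _ do rewrite !mxE.
rewrite (@sum_enum R _ (fun z => Gm (enum_val i) z * F R n z (enum_val j))) orth.
by rewrite (inj_eq enum_val_inj) mulr_natr.
Qed.

Lemma detV : \det Vm != 0.
Proof.
apply/eqP => h0; have := congr1 determinant WV.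
rewrite det_mulmx h0 mulr0 det_scalar => /esym/eqP.
rewrite expf_eq0 pnatr_eq0 muln_eq0 /= => /andP[_ /eqP n0].
by move: n_gt0; rewrite n0.
Qed.

Lemma sumTR (G : T -> R) : \sum_z G z = \sum_(j < n) \sum_(b < 2) G (j, b).
Proof. by rewrite pair_bigA; apply: eq_bigr => -[j b]. Qed.

Lemma normcR (x : R) : Normc.normc (x%:C%C) = `|x|.
Proof. by rewrite /Normc.normc /= expr0n addr0 sqrtr_sqr. Qed.

Definition Esum : R :=
  \sum_(k < n) (`|2 * cos (k%:R * ang) + 1| + `|2 * cos (k%:R * ang) - 1|).

Lemma sum_lam : \sum_(j < N) `|lamR R n (enum_val j)| = Esum.
Proof.
rewrite (@sum_enumR R _ (fun z => `|lamR R n z|)) sumTR /Esum.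
apply: eq_bigr => k _.
by rewrite !big_ord_recl big_ord0 /lamR /= expr0 expr1 addr0.
Qed.

Lemma energyE : energy R (prism_rel n) = Esum.
Proof.
rewrite /energy (@eig_sum R _ _ _ _ _ detV AV).
under eq_bigr => j _ do rewrite /Normc.normc /= expr0n addr0 sqrtr_sqr.
exact: sum_lam.
Qed.

Lemma deg3 (x : T) : deg (prism_rel n) x = 3%N.
Proof.
pose y0 : T := (Ordinal n_gt0, ord0).
have hF : forall z, F R n z y0 = 1.
  by move=> z; rewrite /F /= !muln0 w0 /sgn expr0 mulr1.
have e3 : lamR R n y0 = 3%:R.
  rewrite /lamR /= mul0r cos0 expr0; lra.
have h : \sum_z ((prism_rel n x z)%:R : C) = 3%:R.
  have := @eigF R n hn x y0; rewrite hF mulr1 e3 rmorph_nat => <-.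
  by apply: eq_bigr => z _; rewrite hF mulr1.
rewrite /deg -sum1dep_card big_mkcond /=.
apply/eqP; rewrite -(eqr_nat C) natr_sum.
rewrite (eq_bigr (fun z => ((prism_rel n x z)%:R : C))); last first.
  by move=> z _; case: (prism_rel n x z).
by rewrite h.
Qed.

Lemma cardT : #|{: 'I_n * 'I_2}| = (2 * n)%N.
Proof. by rewrite card_prod !card_ord mulnC. Qed.

Lemma nedgesE : nedges (prism_rel n) = (3 * n)%N.
Proof.
rewrite /nedges -sum1dep_card big_mkcond /=.
rewrite -(pair_bigA _ (fun x y => if prism_rel n x y then 1%N else 0%N)) /=.
rewrite (eq_bigr (fun _ => 3%N)); last first.
  by move=> x _; rewrite -(deg3 x) /deg -sum1dep_card [RHS]big_mkcond.
rewrite sum_nat_const card_prod !card_ord.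
have -> : (n * 2 * 3 = (3 * n) * 2)%N by lia.
by rewrite mulnK.
Qed.

Lemma QV : map_mx (real_complex R) (signlessmx R (prism_rel n)) *m Vm =
  Vm *m diag_mx (\row_j (3 + lamR R n (enum_val j))%:C%C).
Proof.
have hD : degmx R (prism_rel n) = 3%:M.
  apply/matrixP => i j; rewrite !mxE deg3.
  by case: (i == j).
rewrite /signlessmx map_mxD mulmxDl hD map_scalar_mx mul_scalar_mx AV.
rewrite !mul_mx_diag; apply/matrixP => i j; rewrite !mxE !rmorphD !rmorph1 /=.
ring.
Qed.

Lemma QEnergyE : QEnergy R (prism_rel n) = Esum.
Proof.
rewrite /QEnergy (@eig_sum R _ _ _ _ _ detV QV) nedgesE.
have -> : ((2 * (3 * n))%N%:R / (#|{: 'I_n * 'I_2}|)%:R : R) = 3.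
  rewrite cardT (_ : (2 * (3 * n) = 3 * (2 * n))%N); last by lia.
  have hne : ((2 * n)%N%:R : R) != 0 by rewrite pnatr_eq0; apply/eqP; lia.
  by rewrite natrM mulfK.
under eq_bigr => j _ do rewrite /real_complex_def /Normc.normc /= subr0 expr0n addr0 sqrtr_sqr (addrC 3) addrK.
exact: sum_lam.
Qed.

End Graph2.

Section Ana.
Variable R : realType.

Definition fc (c : R) : R := `|2 * c + 1| + `|2 * c - 1|.

Lemma fc_split (c : R) (P : R -> Prop) :
  (0 <= 2*c+1 -> 0 <= 2*c-1 -> P (2*c+1 + (2*c-1))) ->
  (0 <= 2*c+1 -> 2*c-1 < 0 -> P (2*c+1 - (2*c-1))) ->
  (2*c+1 < 0 -> 0 <= 2*c-1 -> P (-(2*c+1) + (2*c-1))) ->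
  (2*c+1 < 0 -> 2*c-1 < 0 -> P (-(2*c+1) - (2*c-1))) -> P (fc c).
Proof.
rewrite /fc => H1 H2 H3 H4.
have [h1|h1] := lerP 0 (2*c+1); have [h2|h2] := lerP 0 (2*c-1).
- by rewrite (ger0_norm h1) (ger0_norm h2); apply: H1.
- by rewrite (ger0_norm h1) (ltr0_norm h2); apply: H2.
- by rewrite (ltr0_norm h1) (ger0_norm h2); apply: H3.
- by rewrite (ltr0_norm h1) (ltr0_norm h2); apply: H4.
Qed.

Lemma fc_ge2 c : 2 <= fc c.
Proof. by apply: (@fc_split c (fun v => 2 <= v)) => *; lra. Qed.

Lemma fc_le c : -1 <= c <= 1 -> fc c <= 2 + 2 * c ^+ 2.
Proof. move=> /andP[h1 h2]; apply: (@fc_split c (fun v => v <= 2 + 2 * c ^+ 2)) => *; nra. Qed.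

Lemma fc1 : fc 1 = 4.
Proof. by apply: (@fc_split 1 (fun v => v = 4)) => *; lra. Qed.

Lemma fcN1 : fc (-1) = 4.
Proof. by apply: (@fc_split (-1) (fun v => v = 4)) => *; lra. Qed.

Lemma fc0 : fc 0 = 2.
Proof. by apply: (@fc_split 0 (fun v => v = 2)) => *; lra. Qed.

Lemma sqrt_lt (a b : R) : 0 < b -> a < b ^+ 2 -> Num.sqrt a < b.
Proof.
move=> b0 ab; rewrite -(ger0_norm (ltW b0)) -sqrtr_sqr ltr_sqrt //.
by rewrite exprn_gt0.
Qed.

Lemma sqrt_le (a b : R) : 0 <= b -> a <= b ^+ 2 -> Num.sqrt a <= b.
Proof.
move=> b0 ab; rewrite -(ger0_norm b0) -sqrtr_sqr ler_sqrt //.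
by rewrite exprn_ge0.
Qed.

Lemma cos_le_mono (x y : R) : 0 <= x -> x <= y -> y <= pi -> cos y <= cos x.
Proof.
move=> x0 xy yp.
have xp : x <= pi by apply: le_trans xy yp.
have y0 : 0 <= y by apply: le_trans x0 xy.
rewrite leNgt ltr_cos ?in_itv /= ?x0 ?y0 ?xp ?yp //.
by rewrite -leNgt.
Qed.

Lemma cos3 (x : R) : cos (x *+ 3) = 4 * cos x ^+ 3 - 3 * cos x.
Proof.
rewrite mulrS addrC cosD cos_mulr2n sin_mulr2n.
have := cos2Dsin2 x => h.
have hs : sin x ^+ 2 = 1 - cos x ^+ 2 by lra.
rewrite (_ : (cos x * sin x) *+ 2 * sin x = (sin x ^+ 2 * cos x) *+ 2); last first.
  by ring.
rewrite hs; ring.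
Qed.

Lemma cos4 (x : R) : cos (x *+ 4) = 2 * (2 * cos x ^+ 2 - 1) ^+ 2 - 1.
Proof.
rewrite (_ : x *+ 4 = (x *+ 2) *+ 2); last by rewrite -mulrnA.
rewrite !cos_mulr2n; ring.
Qed.

Lemma cosBpi2 (x : R) : cos (pi *+ 2 - x) = cos x.
Proof. by rewrite addrC cosD2pi cosN. Qed.

Lemma pi_gt0' : 0 < (pi : R). Proof. exact: pi_gt0. Qed.

Lemma cos27 : cos (2 * pi / 7 : R) <= 13 / 20.
Proof.
set b : R := 2 * pi / 7.
have p0 := @pi_gt0 R.
have b0 : 0 < b by rewrite /b; lra.
have e : b *+ 4 = pi *+ 2 - b *+ 3.
  by rewrite /b; field.
have := cosBpi2 (b *+ 3); rewrite -e cos4 cos3 => h.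
have c1 : cos b < 1.
  rewrite -cos0 ltr_cos ?in_itv /= ?lexx ?pi_ge0 //; rewrite /b; lra.
set c := cos b in h c1 *.
have hc : (c - 1) * (8 * c ^+ 3 + 4 * c ^+ 2 - 4 * c - 1) = 0 by nra.
have hp : 8 * c ^+ 3 + 4 * c ^+ 2 - 4 * c - 1 = 0.
  move/eqP: hc; rewrite mulf_eq0 => /orP[/eqP|/eqP //]; lra.
rewrite leNgt; apply/negP => hc2.
nra.
Qed.

Lemma cospi4 : cos (pi / 4 : R) ^+ 2 = 1 / 2 /\ 0 < cos (pi / 4 : R).
Proof.
have p0 := @pi_gt0 R.
split; last by apply: cos_gt0_pihalf; apply/andP; split; lra.
have := cos_mulr2n (pi / 4 : R).
rewrite (_ : (pi / 4) *+ 2 = pi / 2); last by field.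
rewrite cos_pihalf => h; lra.
Qed.

Lemma cos38 : 7 / 20 <= cos (3 * pi / 8 : R).
Proof.
have p0 := @pi_gt0 R.
have [s2 s0] := cospi4.
have c0 : 0 <= cos (3 * pi / 8 : R).
  by apply: cos_ge0_pihalf; apply/andP; split; lra.
have := cos_mulr2n (3 * pi / 8 : R).
rewrite (_ : (3 * pi / 8) *+ 2 = pi - pi / 4); last by field.
rewrite cosB cospi sinpi mul0r addr0 => h.
set c := cos _ in c0 h *; set s := cos _ in s2 s0 h.
nra.
Qed.

Lemma cos25 : 0 < cos (2 * pi / 5 : R) /\
   4 * cos (2 * pi / 5 : R) ^+ 2 + 2 * cos (2 * pi / 5 : R) = 1.
Proof.
set b : R := 2 * pi / 5.
have p0 := @pi_gt0 R.
have b0 : 0 < b by rewrite /b; lra.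
have e : b *+ 3 = pi *+ 2 - b *+ 2.
  by rewrite /b; field.
have := cosBpi2 (b *+ 2); rewrite -e cos3 cos_mulr2n  => h.
have c1 : cos b < 1.
  rewrite -cos0 ltr_cos ?in_itv /= ?lexx ?pi_ge0 //; rewrite /b; lra.
have cpos : 0 < cos b.
  by apply: cos_gt0_pihalf; apply/andP; split; rewrite /b; lra.
split => //.
set c := cos b in h c1 cpos *.
have hc : (c - 1) * (4 * c ^+ 2 + 2 * c - 1) = 0 by nra.
move/eqP: hc; rewrite mulf_eq0 => /orP[/eqP|/eqP]; lra.
Qed.

Lemma g_le (c : R) : c <= 13/20 -> Num.sqrt (2*c-1) / (1 + c) <= 1/3.
Proof.
move=> hc; case: (lerP (2*c-1) 0) => h.
  by rewrite ler0_sqrtr // mul0r; lra.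
rewrite ler_pdivrMr; last by lra.
apply: sqrt_le; nra.
Qed.

Lemma h_le (c : R) : 7/20 <= c <= 1 -> Num.sqrt (1 - 2*c) / (2 - c) <= 1/3.
Proof.
move=> /andP[hc hc1]; case: (lerP (1 - 2*c) 0) => h.
  by rewrite ler0_sqrtr // mul0r; lra.
rewrite ler_pdivrMr; last by lra.
apply: sqrt_le; nra.
Qed.

Lemma h_lt25 (c : R) : 0 < c -> 4 * c ^+ 2 + 2 * c = 1 ->
  Num.sqrt (1 - 2*c) / (2 - c) < 2/5.
Proof.
move=> c0 hc.
have c1 : 1/4 < c by nra.
have c2 : c < 1 by nra.
case: (lerP (1 - 2*c) 0) => h.
  by rewrite ler0_sqrtr // mul0r; lra.
rewrite ltr_pdivrMr; last by lra.
apply: sqrt_lt; nra.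
Qed.

Lemma g8 (s : R) : s ^+ 2 = 1/2 -> 0 < s -> 48 * (Num.sqrt (2*s-1) / (1 + s)) < 20.
Proof.
move=> s2 s0.
have : Num.sqrt (2*s-1) / (1 + s) < 5/12.
  rewrite ltr_pdivrMr; last by lra.
  apply: sqrt_lt; nra.
lra.
Qed.

End Ana.

Section Final.
Variable R : realType.
Variable n : nat.
Hypothesis hn : (2 < n)%N.
Local Notation ang := (ang R n).
Local Notation fc := (@fc R).

Let n_gt0 : (0 < n)%N. Proof. by apply: leq_trans hn. Qed.

Lemma EsumE : Esum R n = \sum_(k < n) fc (cos (k%:R * ang)).
Proof. by []. Qed.

Lemma Re_sum (I : finType) (G : I -> R[i]) : complex.Re (\sum_i G i) = \sum_i complex.Re (G i).
Proof.
have hm : {morph (@complex.Re R) : x y / x + y} by move=> [a b] [c d].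
by rewrite (big_morph _ hm (erefl (@complex.Re R 0))).
Qed.

Lemma sum_cos2 : \sum_(k < n) cos (k%:R * ang) ^+ 2 = n%:R / 2.
Proof.
have h0 : \sum_(k < n) cos ((k%:R * ang) *+ 2) = 0.
  have := @geom R n n_gt0 2; rewrite ifF; last first.
    by apply/negP => /dvdn_leq => /(_ isT); lia.
  move/(congr1 (@complex.Re R)); rewrite Re_sum /= => h; rewrite -[X in _ = X]h.
  by apply: eq_bigr => k _; rewrite /w /=; congr cos; rewrite natrM mulrAC mulr_natr.
have e : forall x : R, cos x ^+ 2 = (1 + cos (x *+ 2)) / 2.
  by move=> x; rewrite cos_mulr2n -mulr_natr; field.
rewrite (eq_bigr _ (fun k _ => e _)) -mulr_suml big_split /= h0 addr0 sumr_const card_ord.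
by [].
Qed.

Lemma Esum_le : Esum R n <= 3 * n%:R.
Proof.
rewrite EsumE.
have h : forall k : 'I_n, fc (cos (k%:R * ang)) <= 2 + 2 * cos (k%:R * ang) ^+ 2.
  by move=> k; apply: fc_le; rewrite cos_geN1 cos_le1.
apply: le_trans (ler_sum _ (fun k _ => h k)) _.
rewrite big_split /= -mulr_sumr sum_cos2 sumr_const card_ord -mulr_natr.
have : (0 : R) <= n%:R by rewrite ler0n.
lra.
Qed.

Lemma lt_sqrt (a b : R) : 0 <= b -> b ^+ 2 < a -> b < Num.sqrt a.
Proof.
move=> b0 ab; rewrite -(ger0_norm b0) -sqrtr_sqr ltr_sqrt //.
by apply: le_lt_trans ab; rewrite exprn_ge0.
Qed.

Lemma upper : Esum R n < 3 + Num.sqrt (3 * (2 * n - 1)%N%:R * (2 * n - 3)%N%:R).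
Proof.
apply: le_lt_trans Esum_le _.
rewrite !natrB ?natrM; try lia.
have h3 : (3 : R) <= n%:R by rewrite ler_nat.
rewrite -ltrBlDl; apply: lt_sqrt; first by lra.
nra.
Qed.

Definition gk (k : 'I_n) : R := fc (cos (k%:R * ang)) - 2.

Lemma Esum_g : Esum R n = \sum_k gk k + 2 * n%:R.
Proof.
by rewrite EsumE /gk sumrB sumr_const card_ord [2 * _]mulr_natr subrK.
Qed.

Lemma gk_ge0 k : 0 <= gk k.
Proof. by rewrite /gk subr_ge0 fc_ge2. Qed.

Lemma Esum_ge : 2 * n%:R + 2 <= Esum R n.
Proof.
rewrite Esum_g (bigD1 (Ordinal n_gt0)) //= {1}/gk /= mul0r cos0 fc1.
have : 0 <= \sum_(i < n | i != Ordinal n_gt0) gk i by apply: sumr_ge0 => i _; exact: gk_ge0.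
lra.
Qed.

Lemma Esum_ge_even m : n = (2 * m)%N -> 2 * n%:R + 4 <= Esum R n.
Proof.
move=> hm.
have m0 : (0 < m)%N by lia.
have mn : (m < n)%N by lia.
pose k0 : 'I_n := Ordinal n_gt0.
pose k1 : 'I_n := Ordinal mn.
have k10 : k1 != k0 by rewrite -(inj_eq val_inj) /=; apply/eqP; lia.
rewrite Esum_g (bigD1 k0) //= (bigD1 k1) //=.
have -> : gk k0 = 2 by rewrite /gk /= mul0r cos0 fc1; lra.
have -> : gk k1 = 2.
  rewrite /gk /= /ang.
  have -> : m%:R * (2 * pi / n%:R) = (pi : R).
    rewrite hm natrM; field; rewrite pnatr_eq0; apply/eqP; lia.
  rewrite cospi fcN1; lra.
have : 0 <= \sum_(i < n | (i != k0) && (i != k1)) gk i.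
  by apply: sumr_ge0 => i _; exact: gk_ge0.
lra.
Qed.

End Final.

Section Lower.
Variable R : realType.

Lemma t_bound (n m : nat) (a b : R) : (0 < n)%N ->
  (a * n%:R <= b * m%:R) -> a <= b * (m%:R / n%:R).
Proof.
move=> n0 h.
have nR : (0 : R) < n%:R by rewrite ltr0n.
by rewrite mulrA ler_pdivlMr.
Qed.

Lemma t_bound2 (n m : nat) (a b : R) : (0 < n)%N ->
  (b * m%:R <= a * n%:R) -> b * (m%:R / n%:R) <= a.
Proof.
move=> n0 h.
have nR : (0 : R) < n%:R by rewrite ltr0n.
by rewrite mulrA ler_pdivrMr.
Qed.

Lemma lower_strict (n : nat) : (2 < n)%N -> n <> 4%N ->
  prism_lower_bound R n < Esum R n.
Proof.
move=> hn n4.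
have n0 : (0 < n)%N by lia.
have Eg := @Esum_ge R n hn.
have p0 := @pi_gt0 R.
have nR : (3:R) <= n%:R by rewrite ler_nat.
rewrite /prism_lower_bound.
case: ifP => h3.
  rewrite natrM; lra.
case: ifP => h12.
  case: (eqVneq n 8) => h8.
    have Ee := @Esum_ge_even R n hn 4 h8.
    rewrite h8 in Ee *.
    rewrite (_ : (8 %/ 6)%N = 1%N) // (_ : 2 * pi * 1%:R / 8%:R = pi / 4 :> R); last by field.
    have [s2 s0] := @cospi4 R.
    have := @g8 R _ s2 s0.
    rewrite (_ : (6 * 8 = 48)%N) //.
    lra.
  set m := (n %/ 6)%N.
  have hm1 : (n <= 7 * m)%N by rewrite /m; lia.
  have hm2 : (2 * m <= n)%N by rewrite /m; lia.
  set c := cos _.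
  have hc : c <= 13/20.
    apply: le_trans (cos27 R); rewrite /c -mulrA; apply: cos_le_mono.
    - lra.
    - apply: t_bound => //.
      have : ((n%:R : R) <= (7 * m)%N%:R) by rewrite ler_nat.
      rewrite natrM; nra.
    - apply: t_bound2 => //.
      have : (((2 * m)%N%:R : R) <= n%:R) by rewrite ler_nat.
      rewrite natrM; nra.
  have := @g_le R c hc.
  have h6 : (0 : R) <= (6 * n)%N%:R by rewrite ler0n.
  rewrite natrM in h6 * => hg.
  have : 6%:R * n%:R * (Num.sqrt (2 * c - 1) / (1 + c)) <= 6%:R * n%:R * (1/3 : R).
    by apply: ler_wpM2l.
  lra.
have h45 : (n %% 6 == 4)%N || (n %% 6 == 5)%N.
  by move: h3 h12; lia.
case: (eqVneq n 5) => h5.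
  have Ee := @Esum_ge R n hn.
  rewrite h5 in Ee *.
  rewrite (_ : ((5 + 5) %/ 6)%N = 1%N) // (_ : 2 * pi * 1%:R / 5%:R = 2 * pi / 5 :> R); last by field.
  have [c0 c2] := @cos25 R.
  have := @h_lt25 R _ c0 c2.
  rewrite (_ : (6 * 5 = 30)%N) //.
  lra.
case: (eqVneq n 10) => h10.
  have Ee := @Esum_ge_even R n hn 5 h10.
  rewrite h10 in Ee *.
  rewrite (_ : ((10 + 5) %/ 6)%N = 2%N) // (_ : 2 * pi * 2%:R / 10%:R = 2 * pi / 5 :> R); last by field.
  have [c0 c2] := @cos25 R.
  have := @h_lt25 R _ c0 c2.
  rewrite (_ : (6 * 10 = 60)%N) //.
  lra.
set m := ((n + 5) %/ 6)%N.
have hm1 : (16 * m <= 3 * n)%N by rewrite /m; move: h45; lia.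
set c := cos _.
have hc : 7/20 <= c.
  have et : 2 * pi * m%:R / n%:R = 2 * pi * (m%:R / n%:R) :> R by rewrite mulrA.
  rewrite /c et; apply: le_trans (cos38 R) _; apply: cos_le_mono.
  - apply: mulr_ge0; first lra.
    by apply: divr_ge0; rewrite ler0n.
  - apply: t_bound2 => //.
    have : (((16 * m)%N%:R : R) <= (3 * n)%N%:R) by rewrite ler_nat.
    rewrite !natrM; nra.
  - lra.
have := @h_le R c; rewrite hc cos_le1 => /(_ isT) hg.
have h6 : (0 : R) <= (6 * n)%N%:R by rewrite ler0n.
rewrite natrM in h6 *.
have : 6%:R * n%:R * (Num.sqrt (1 - 2 * c) / (2 - c)) <= 6%:R * n%:R * (1/3 : R).
  by apply: ler_wpM2l.
lra.
Qed.

End Lower.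

Section Four.
Variable R : realType.

Lemma Esum4 : Esum R 4 = 12.
Proof.
rewrite /Esum !big_ord_recl big_ord0 /= /ang.
have p0 := @pi_gt0 R.
rewrite mul0r.
rewrite (_ : (bump 0 0)%:R * (2 * pi / 4) = pi / 2 :> R); last by rewrite /bump /=; field.
rewrite (_ : (bump 0 (bump 0 0))%:R * (2 * pi / 4) = pi :> R); last by rewrite /bump /=; field.
rewrite (_ : (bump 0 (bump 0 (bump 0 0)))%:R * (2 * pi / 4) = pi / 2 + pi :> R); last by rewrite /bump /=; field.
rewrite (cosDpi (pi / 2)) cos_pihalf cospi cos0 oppr0.
have := fc1 R; have := fcN1 R; have := fc0 R; rewrite /fc => h0 hN h1.
lra.
Qed.

Lemma L4 : prism_lower_bound R 4 = 12.
Proof.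
rewrite /prism_lower_bound /=.
rewrite (_ : ((4 + 5) %/ 6 = 1)%N) // (_ : (6 * 4 = 24)%N) //.
rewrite (_ : 2 * pi * 1%:R / 4 = pi / 2 :> R); last by field.
rewrite cos_pihalf mulr0 !subr0 sqrtr1.
lra.
Qed.

End Four.

Theorem mainTheorem18 (R : realType) (n : nat) (hn : (3 <= n)%N) :
  energy R (prism_rel n) <
    3 + Num.sqrt (3 * (2 * n - 1)%N%:R * (2 * n - 3)%N%:R)
  /\ energy R (prism_rel n) = QEnergy R (prism_rel n)
  /\ prism_lower_bound R n <= energy R (prism_rel n)
  /\ (energy R (prism_rel n) = prism_lower_bound R n <-> n = 4%N).
Proof.
have hn' : (2 < n)%N by [].
rewrite (@energyE R n hn') (@QEnergyE R n hn').
split; first exact: (@upper R n hn').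
split; first by [].
case: (eqVneq n 4) => h4.
  subst n; rewrite Esum4 L4; split => //.
have h4' : n <> 4%N by apply/eqP.
have hl := @lower_strict R n hn' h4'.
split; first exact: ltW.
split => [h|h]; last by move: h4; rewrite h eqxx.
by move: hl; rewrite h ltxx.
Qed.
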